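(* Let $X$ and $Y$ be finitely dominated sequence classes such that $Y$ is finitely injective and $\mathcal L_{X;Y}$ (with norm $\|\cdot\|_{X;Y}$) is a Banach operator ideal. Then $\mathcal L_{X;Y}$ is injective: whenever $T\in\mathcal L(E;F)$ and $i:F\to G$ is a metric injection with $i\circ T\in\mathcal L_{X;Y}(E;G)$, then $T\in\mathcal L_{X;Y}(E;F)$ and $\|T\|_{X;Y}=\|i\circ T\|_{X;Y}$.
   Context: A sequence class is a rule $X$ assigning to each Banach space $E$ a Banach space $X(E)$, a linear subspace of $E^{\mathbb{N}}$, with $c_{00}(E)\subseteq X(E)\subseteq\ell_\infty(E)$, $\|\cdot\|_\infty\le\|\cdot\|_{X(E)}$, and $\|x\cdot e_j\|_{X(E)}=\|x\|$ ($x\cdot e_j$ is the sequence with $x$ in coordinate $j$, $0$ elsewhere; finite families $(x_j)_{j=1}^k$ are identified with $(x_1,\dots,x_k,0,\dots)$). $T\in\mathcal L_{X;Y}(E;F)$ if $(T(x_j))\in Y(F)$ for all $(x_j)\in X(E)$, with $\|T\|_{X;Y}$ the norm of $(x_j)\mapsto(T(x_j))$ from $X(E)$ to $Y(F)$. Finitely determined: $(x_j)\in X(E)$ iff $\sup_k\|(x_j)_{j=1}^k\|_{X(E)}<\infty$, norm equal to that sup. Finitely dominated: there is a finitely determined sequence class $Z$ with $X(E)$ a closed subspace of $Z(E)$ for all $E$ and either (I) $(x_j)\in Z(E)$ lies in $X(E)$ iff $\lim_k\|(x_j)_{j=k}^\infty\|_{Z(E)}=0$, or (II) iff $\lim_{k,l}\|(x_j)_{j=k}^l\|_{Z(E)}=0$.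 Finitely injective: $\|(x_j)_{j=1}^k\|_{X(E)}\le\|(i(x_j))_{j=1}^k\|_{X(G)}$ for every metric injection (linear isometric embedding) $i:E\to G$, $k\in\mathbb{N}$, $x_1,\dots,x_k\in E$. *)

(* Defs.v *)
From HB Require Import structures.
From mathcomp Require Import all_boot all_order all_algebra.
From mathcomp Require Import all_classical all_reals all_analysis.
Unset Strict Implicit. Unset Printing Implicit Defensive.
Import Order.TTheory GRing.Theory Num.Theory.
Import numFieldNormedType.Exports.
Local Open Scope classical_set_scope.
Local Open Scope ring_scope.

Section SeqClasses.
Context {R : realType}.

Definition is_lin {E F : normedModType R} (T : E -> F) : Prop :=
  forall (a : R) (x y : E), T (a *: x + y) = a *: T x + T y.

(* T \in L(E;F): continuous (= bounded) linear operator *)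
Definition bounded_op {E F : normedModType R} (T : E -> F) : Prop :=
  is_lin T /\ continuous T.

Definition opnorm {E F : normedModType R} (T : E -> F) : \bar R :=
  ereal_sup [set (`|T x|)%:E | x in [set x : E | `|x| <= 1]].

Definition metric_injection {E G : normedModType R} (i : E -> G) : Prop :=
  is_lin i /\ forall x, `|i x| = `|x|.

(* ---------- sequences (indices start at 0) ---------- *)
(* (x_j)_{j=1}^k identified with (x_1,...,x_k,0,0,...) *)
Definition trunc {E : normedModType R} (k : nat) (x : nat -> E) : nat -> E :=
  fun j => if (j < k)%N then x j else 0.
(* (x_j)_{j=k}^oo identified with (0,...,0,x_k,x_{k+1},...) *)
Definition tail {E : normedModType R} (k : nat) (x : nat -> E) : nat -> E :=
  fun j => if (j < k)%N then 0 else x j.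
(* (x_j)_{j=k}^l identified with (0,...,0,x_k,...,x_l,0,...) *)
Definition block {E : normedModType R} (k l : nat) (x : nat -> E) : nat -> E :=
  fun j => if (k <= j <= l)%N then x j else 0.
Definition unitseq {E : normedModType R} (v : E) (j : nat) : nat -> E :=
  fun n => if n == j then v else 0.

Record seq_class := SeqClass {
  sc_mem : forall E : completeNormedModType R, set (nat -> E);
  sc_norm : forall E : completeNormedModType R, (nat -> E) -> R;
  sc_mem0 : forall E, sc_mem E (fun _ => 0);
  sc_memD : forall E x y, sc_mem E x -> sc_mem E y ->
    sc_mem E (fun j => x j + y j);
  sc_memZ : forall E (a : R) x, sc_mem E x -> sc_mem E (fun j => a *: x j);
  sc_norm_ge0 : forall E x, sc_mem E x -> 0 <= sc_norm E x;
  sc_norm_eq0 : forall E x, sc_mem E x -> sc_norm E x = 0 -> x = (fun _ => 0);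
  sc_normZ : forall E (a : R) x, sc_mem E x ->
    sc_norm E (fun j => a *: x j) = `|a| * sc_norm E x;
  sc_normD : forall E x y, sc_mem E x -> sc_mem E y ->
    sc_norm E (fun j => x j + y j) <= sc_norm E x + sc_norm E y;
  sc_complete : forall (E : completeNormedModType R) (u : nat -> nat -> E), (forall n, sc_mem E (u n)) ->
    (forall eps : R, 0 < eps -> exists N, forall m n, (N <= m)%N -> (N <= n)%N ->
       sc_norm E (fun j => u m j - u n j) < eps) ->
    exists x, sc_mem E x /\
      forall eps : R, 0 < eps -> exists N, forall n, (N <= n)%N ->
        sc_norm E (fun j => u n j - x j) < eps;
  sc_c00 : forall (E : completeNormedModType R) (x : nat -> E), (exists N, forall j, (N <= j)%N -> x j = 0) ->
    sc_mem E x;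
  sc_linfty : forall E x, sc_mem E x -> exists M : R, forall j, `|x j| <= M;
  sc_sup_le : forall E x, sc_mem E x -> forall j, `|x j| <= sc_norm E x;
  sc_unit : forall (E : completeNormedModType R) (v : E) j, sc_norm E (unitseq v j) = `|v|
}.

Definition L_XY (X Y : seq_class) (E F : completeNormedModType R)
    (T : E -> F) : Prop :=
  bounded_op T /\ forall x, sc_mem X E x -> sc_mem Y F (T \o x).

Definition norm_XY (X Y : seq_class) (E F : completeNormedModType R)
    (T : E -> F) : \bar R :=
  ereal_sup [set (sc_norm Y F (T \o x))%:E |
               x in [set x | sc_mem X E x /\ sc_norm X E x <= 1]].

Definition finitely_determined (X : seq_class) : Prop :=
  forall (E : completeNormedModType R) (x : nat -> E),
    (sc_mem X E x <-> exists M : R, forall k, sc_norm X E (trunc k x) <= M) /\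
    (sc_mem X E x ->
       (sc_norm X E x)%:E = ereal_sup (range (fun k => (sc_norm X E (trunc k x))%:E))).

Definition closed_subclass (X Z : seq_class) (E : completeNormedModType R) : Prop :=
  (forall x, sc_mem X E x -> sc_mem Z E x /\ sc_norm X E x = sc_norm Z E x) /\
  (forall (u : nat -> nat -> E) (z : nat -> E),
     (forall n, sc_mem X E (u n)) -> sc_mem Z E z ->
     (fun n => sc_norm Z E (fun j => u n j - z j)) @ \oo --> (0 : R) ->
     sc_mem X E z).

Definition finitely_dominated (X : seq_class) : Prop :=
  exists Z : seq_class, finitely_determined Z /\
    (forall E, closed_subclass X Z E) /\
    ((forall (E : completeNormedModType R) (x : nat -> E), sc_mem Z E x ->
        (sc_mem X E x <-> (fun k => sc_norm Z E (tail k x)) @ \oo --> (0 : R)))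
     \/
     (forall (E : completeNormedModType R) (x : nat -> E), sc_mem Z E x ->
        (sc_mem X E x <-> forall eps : R, 0 < eps -> exists N, forall k l,
            (N <= k)%N -> (k <= l)%N -> sc_norm Z E (block k l x) < eps))).

Definition finitely_injective (X : seq_class) : Prop :=
  forall (E G : completeNormedModType R) (i : E -> G), metric_injection i ->
    forall (k : nat) (x : nat -> E),
      sc_norm X E (trunc k x) <= sc_norm X G (trunc k (i \o x)).

Definition banach_op_ideal
    (I : forall E F : completeNormedModType R, set (E -> F))
    (N : forall E F : completeNormedModType R, (E -> F) -> \bar R) : Prop :=
  (forall (E F : completeNormedModType R) (T : E -> F), I E F T -> bounded_op T) /\
  (forall E F, I E F (fun _ => 0)) /\
  (forall (E F : completeNormedModType R) (S T : E -> F), I E F S -> I E F T -> I E F (fun x => S x + T x)) /\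
  (forall (E F : completeNormedModType R) (a : R) (T : E -> F), I E F T -> I E F (fun x => a *: T x)) /\
  (forall (E F : completeNormedModType R) (T : E -> F), I E F T -> N E F T \is a fin_num /\ (0 <= N E F T)%E) /\
  (forall (E F : completeNormedModType R) (T : E -> F), I E F T -> N E F T = 0%E -> T = (fun _ => 0)) /\
  (forall (E F : completeNormedModType R) (a : R) (T : E -> F), I E F T ->
     N E F (fun x => a *: T x) = (`|a|%:E * N E F T)%E) /\
  (forall (E F : completeNormedModType R) (S T : E -> F), I E F S -> I E F T ->
     (N E F (fun x => (S x + T x)%R) <= N E F S + N E F T)%E) /\
  (forall (E F : completeNormedModType R) (u : nat -> E -> F), (forall n, I E F (u n)) ->
     (forall eps : R, 0 < eps -> exists M, forall m n, (M <= m)%N -> (M <= n)%N ->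
        (N E F (fun x => (u m x - u n x)%R) < eps%:E)%E) ->
     exists T, I E F T /\
       forall eps : R, 0 < eps -> exists M, forall n, (M <= n)%N ->
         (N E F (fun x => (u n x - T x)%R) < eps%:E)%E) /\
  (forall (E F : completeNormedModType R) (phi : E -> R^o) (y : F), bounded_op phi ->
     I E F (fun x => phi x *: y) /\
     N E F (fun x => phi x *: y) = (opnorm phi * (`|y|)%:E)%E) /\
  (forall (D E F G : completeNormedModType R) (B : D -> E) (T : E -> F) (A : F -> G),
     bounded_op B -> I E F T -> bounded_op A ->
     I D G (A \o T \o B) /\
     (N D G (A \o T \o B) <= opnorm A * N E F T * opnorm B)%E).

Definition injective_ideal
    (I : forall E F : completeNormedModType R, set (E -> F))
    (N : forall E F : completeNormedModType R, (E -> F) -> \bar R) : Prop :=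
  forall (E F G : completeNormedModType R) (T : E -> F) (i : F -> G),
    bounded_op T -> metric_injection i -> I E G (i \o T) ->
    I E F T /\ N E F T = N E G (i \o T).

End SeqClasses.

(* Main.v *)
Require Import Defs.
From HB Require Import structures.
From mathcomp Require Import all_boot all_order all_algebra.
From mathcomp Require Import all_classical all_reals all_analysis.
Import Order.TTheory GRing.Theory Num.Theory.
Import numFieldNormedType.Exports.
Local Open Scope classical_set_scope.
Local Open Scope ring_scope.

Set Implicit Arguments.
Section Aux.
Context {R : realType}.

Lemma mi0 (F G : normedModType R) (i : F -> G) : metric_injection i -> i 0 = 0.
Proof. by move=> [_ Hn]; apply/normr0_eq0; rewrite Hn normr0. Qed.

Lemma miB (F G : normedModType R) (i : F -> G) : metric_injection i ->
  forall x y, i (x - y) = i x - i y.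
Proof.
move=> [Hl _] x y; have := Hl (-1) y x.
by rewrite scaleN1r addrC => ->; rewrite scaleN1r addrC.
Qed.

Lemma mi_cont (F G : normedModType R) (i : F -> G) : metric_injection i ->
  continuous i.
Proof.
move=> Hi x; apply/cvgrPdist_lt => e e0.
have : id y @[y --> x] --> x by apply: cvg_id.
move=> /cvgrPdist_lt /(_ e e0).
apply: filterS => y /=.
by rewrite -(miB Hi) (proj2 Hi).
Qed.

End Aux.

Section Key.
Context {R : realType}.

Lemma trunc_c00 (Y : @seq_class R) (E : completeNormedModType R) k (w : nat -> E) :
  sc_mem Y E (trunc k w).
Proof. by apply: sc_c00; exists k => j jk; rewrite /trunc ltnNge jk. Qed.

Lemma block_c00 (Y : @seq_class R) (E : completeNormedModType R) k l (w : nat -> E) :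
  sc_mem Y E (block k l w).
Proof.
apply: sc_c00; exists l.+1 => j jk; rewrite /block.
by case: ifP => // /andP [_ H]; move: jk; rewrite ltnNge H.
Qed.

Lemma tail_mem (Y : @seq_class R) (E : completeNormedModType R) k (w : nat -> E) :
  sc_mem Y E w -> sc_mem Y E (tail k w).
Proof.
move=> Hw.
have -> : tail k w = fun j => w j + (-1) *: trunc k w j.
  apply: funext => j; rewrite /tail /trunc; case: ifP => _.
    by rewrite scaleN1r subrr.
  by rewrite scaler0 addr0.
by apply: sc_memD => //; apply: sc_memZ; apply: trunc_c00.
Qed.

Lemma opnorm_le1 (E F : normedModType R) (f : E -> F) :
  (forall x, `|f x| <= `|x|) -> (opnorm f <= 1)%E.
Proof.
move=> H; apply: ge_ereal_sup => _ [x /= Hx <-].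
by rewrite lee_fin; apply: le_trans (H x) Hx.
Qed.

Lemma opnorm_ge0 (E F : normedModType R) (f : E -> F) : (0 <= opnorm f)%E.
Proof.
apply: le_trans (_ : (`|f 0|)%:E <= _)%E; first by rewrite lee_fin.
by apply: ereal_sup_ubound; exists 0 => //=; rewrite normr0 ler01.
Qed.

Lemma keyA (Z Y : @seq_class R) : finitely_determined Z ->
  (forall E, closed_subclass Y Z E) -> finitely_injective Y ->
  forall (F G : completeNormedModType R) (i : F -> G), metric_injection i ->
  forall y : nat -> F, sc_mem Z G (i \o y) ->
  sc_mem Z F y /\ sc_norm Z F y <= sc_norm Z G (i \o y).
Proof.
move=> fdZ cl finj F G i Hi y HZ.
have Hb : forall k, sc_norm Z F (trunc k y) <= sc_norm Z G (i \o y).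
  move=> k.
  rewrite -(proj2 (proj1 (cl F) _ (@trunc_c00 Y F k y))).
  apply: le_trans (finj F G i Hi k y) _.
  rewrite (proj2 (proj1 (cl G) _ (@trunc_c00 Y G k (i \o y)))).
  rewrite -lee_fin (proj2 (fdZ G (i \o y)) HZ).
  by apply: ereal_sup_ubound; exists k.
have Hm : sc_mem Z F y by apply/(proj1 (fdZ F y)); exists (sc_norm Z G (i \o y)).
split=> //.
rewrite -lee_fin (proj2 (fdZ F y) Hm).
by apply: ge_ereal_sup => _ [k _ <-]; rewrite lee_fin.
Qed.

End Key.

Theorem lemma3p8 (R : realType) (X Y : @seq_class R) :
  finitely_dominated X -> finitely_dominated Y -> finitely_injective Y ->
  banach_op_ideal (L_XY X Y) (norm_XY X Y) ->
  forall (E F G : completeNormedModType R) (T : E -> F) (i : F -> G),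
    bounded_op T -> metric_injection i -> L_XY X Y E G (i \o T) ->
    L_XY X Y E F T /\ norm_XY X Y E F T = norm_XY X Y E G (i \o T).
Proof.
move=> _ [Z [fdZ [cl HZ]]] finj Hid E F G T i HT Hi [_ HiT].
have memT : forall x, sc_mem X E x -> sc_mem Y F (T \o x) /\
    sc_norm Y F (T \o x) <= sc_norm Y G (i \o T \o x).
  move=> x Hx; set y := T \o x.
  have HYi : sc_mem Y G (i \o y) := HiT x Hx.
  have HZi := proj1 (proj1 (cl G) _ HYi).
  have [HZy Hle] := keyA fdZ cl finj Hi y HZi.
  have memY : sc_mem Y F y.
    case: HZ => [H1|H2].
    - apply/(H1 F y HZy).
      apply: (@squeeze_cvgr _ _ _ _ (fun=> 0)
         (fun k => sc_norm Z G (tail k (i \o y)))); last 2 first.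
      + exact: cvg_cst.
      + exact: (proj1 (H1 G _ HZi) HYi).
      apply: nearW => k.
      have Heq : i \o tail k y = tail k (i \o y).
        by apply: funext => j; rewrite /tail /=; case: ifP => // _; rewrite mi0.
      have HZt : sc_mem Z G (i \o tail k y) by rewrite Heq; apply: tail_mem.
      have [Hm Hl] := keyA fdZ cl finj Hi _ HZt.
      by rewrite sc_norm_ge0 //= -Heq.
    - apply/(H2 F y HZy) => eps e0.
      have [N HN] := proj1 (H2 G _ HZi) HYi eps e0.
      exists N => k l Nk kl; apply: le_lt_trans (HN k l Nk kl).
      have Heq : i \o block k l y = block k l (i \o y).
        by apply: funext => j; rewrite /block /=; case: ifP => // _; rewrite mi0.
      have HZt : sc_mem Z G (i \o block k l y) by rewrite Heq; apply: block_c00.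
      have [Hm Hl] := keyA fdZ cl finj Hi _ HZt.
      by rewrite -Heq.
  split=> //.
  rewrite (proj2 (proj1 (cl F) _ memY)) (proj2 (proj1 (cl G) _ HYi)).
  exact: Hle.
have LXY : L_XY X Y E F T := conj HT (fun x Hx => proj1 (memT x Hx)).
split=> //.
apply/eqP; rewrite eq_le; apply/andP; split.
  apply: ge_ereal_sup => _ [x [Hx Hx1] <-].
  apply: le_trans (_ : (sc_norm Y G (i \o T \o x))%:E <= _)%E.
    by rewrite lee_fin; exact: (proj2 (memT x Hx)).
  by apply: ereal_sup_ubound; exists x.
have [_ [_ [_ [_ [Hnn [_ [_ [_ [_ [_ Hcomp]]]]]]]]]] := Hid.
have bid : bounded_op (@id E) by split; [move=> ? ? ?|move=> ?; exact: cvg_id].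
have bi : bounded_op i by split; [exact: (proj1 Hi)|exact: mi_cont].
have [_ Hc] := Hcomp E E F G id T i bid LXY bi.
change (norm_XY X Y E G (i \o T \o id) <= norm_XY X Y E F T)%E.
apply: le_trans Hc _.
have n0 := proj2 (Hnn E F T LXY).
have a0 := @opnorm_ge0 R F G i; have b0 := @opnorm_ge0 R E E id.
have a1 : (opnorm i <= 1)%E by apply: opnorm_le1 => x; rewrite (proj2 Hi).
have b1 : (opnorm (@id E) <= 1)%E by apply: opnorm_le1.
rewrite -[leRHS]mule1; apply: lee_pmul => //.
  exact: mule_ge0.
by rewrite -[leRHS]mul1e; apply: lee_pmul.
Qed.
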